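(* For $D \in \mathbb{R}^{m\times n}$ and $Q \in \mathbb{Z}^{m\times n}$ whose $j$th column stores the sorting of the $j$th column of $D$, the call QuickLexSortAllSubsets$(D,Q,\emptyset,\mathbf{0})$ (empty set, zero vector of length $m$) has running time $O(m 2^n)$ and space requirements $O(mn)$.
   Context: ''The $j$th column of $Q$ stores the sorting of the $j$th column of $D$'' means $(Q_{0j},\ldots,Q_{m-1,j})$ is a permutation of $\{0,\ldots,m-1\}$ with $D_{Q_{0j},j} \le \cdots \le D_{Q_{m-1,j},j}$. Model: unit-cost random access machine; outputting a vector of length $m$ costs $O(m)$; space includes the inputs. QuickLexSortRefine$(D,Q,i,L)$: initialize integer arrays $\mathrm{IDval},\mathrm{IDvalInit},\mathrm{subID},\mathrm{newCount},\mathrm{numNewID}$ of length $m$ to zero. For $j=0,\ldots,m-1$: let $r := Q[j,i]$, $\ell := L[r]$; if $\mathrm{IDvalInit}[\ell]=0$, set $\mathrm{IDvalInit}[\ell]:=1$, $\mathrm{IDval}[\ell]:=D[r,i]$; otherwise if $\mathrm{IDval}[\ell]\neq D[r,i]$, set $\mathrm{IDval}[\ell]:=D[r,i]$ and increment $\mathrm{newCount}[\ell]$; then set $\mathrm{subID}[r]:=\mathrm{newCount}[\ell]$. Set $\mathrm{numNewID}[m-1]:=\sum_{j=0}^{m-2}\mathrm{newCount}[j]$ and for $j=m-2,\ldots,1$, $\mathrm{numNewID}[j]:=\mathrm{numNewID}[j+1]-\mathrm{newCount}[j]$. Return $L'$ with $L'[j]:=L[j]+\mathrm{numNewID}[L[j]]+\mathrm{subID}[j]$.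 QuickLexSortAllSubsets$(D,Q,A,L)$ for a set $A\subseteq\{0,\ldots,n-1\}$ (recursive; $\max\emptyset := -1$): for each integer $i$ with $\max(A) < i < n$: set $L' :=$ QuickLexSortRefine$(D,Q,i,L)$, output $L'$, and call QuickLexSortAllSubsets$(D,Q,A\cup\{i\},L')$. *)

(* Defs.v *)
From HB Require Import structures.
From mathcomp Require Import all_boot all_order all_algebra.
From mathcomp Require Import reals.
Set Implicit Arguments. Unset Strict Implicit. Unset Printing Implicit Defensive.
Import Order.TTheory GRing.Theory Num.Theory.

(* Cost model: unit-cost RAM.  A computation in the monad [CM] threads a     *)
(* resource state recording the elapsed time (number of unit-cost steps),   *)
(* the current memory usage (in words) and the peak memory usage so far.    *)
Record cst := CSt { time : nat; cur : nat; peak : nat }.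

Definition CM (A : Type) := cst -> A * cst.

Definition ret {A} (a : A) : CM A := fun s => (a, s).
Definition bind {A B} (x : CM A) (f : A -> CM B) : CM B :=
  fun s => let: (a, s') := x s in f a s'.

Notation "x <-- c ;; f" := (bind c (fun x => f))
  (at level 61, c at next level, right associativity).
Notation "c ;;; f" := (bind c (fun _ => f))
  (at level 61, right associativity).

Definition tick (k : nat) : CM unit :=
  fun s => (tt, CSt (time s + k) (cur s) (peak s)).
(* allocate (and zero-initialise) k words: costs k steps and k words *)
Definition alloc (k : nat) : CM unit :=
  fun s => (tt, CSt (time s + k) (cur s + k) (maxn (peak s) (cur s + k))).
Definition free (k : nat) : CM unit :=
  fun s => (tt, CSt (time s) (cur s - k) (peak s)).

Definition aread {T} (x0 : T) (a : seq T) (j : nat) : CM T :=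
  tick 1 ;;; ret (nth x0 a j).
Definition awrite {T} (x0 : T) (a : seq T) (j : nat) (v : T) : CM (seq T) :=
  tick 1 ;;; ret (set_nth x0 a j v).

Fixpoint forM {I A : Type} (s : seq I) (f : I -> A -> CM A) (acc : A) : CM A :=
  match s with
  | [::] => ret acc
  | i :: s' => tick 1 ;;; a <-- f i acc ;; forM s' f a
  end.

(* Entries of Q are row indices, so Q is a matrix over 'I_m.                *)
Definition stores_sorting (R : realType) (m n : nat)
    (D : 'M[R]_(m, n)) (Q : 'M['I_m]_(m, n)) : Prop :=
  forall j : 'I_n,
    injective (fun k : 'I_m => Q k j) /\
    (forall k1 k2 : 'I_m, (k1 <= k2)%N -> (D (Q k1 j) j <= D (Q k2 j) j)%R).

Section Algo.
Variables (R : realType) (m n : nat) (D : 'M[R]_(m, n)) (Q : 'M['I_m]_(m, n)).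

Record rstate := RSt {
  IDval : seq R; IDvalInit : seq nat; subID : seq nat;
  newCount : seq nat; numNewID : seq nat }.

Definition refine_body (i : 'I_n) (L : seq nat) (j : 'I_m) (st : rstate)
    : CM rstate :=
  let: RSt IV IVI sub nc nn := st in
  tick 1 ;;;                                   (* r := Q[j,i] *)
  let r := Q j i in
  l <-- aread 0 L r ;;
  b <-- aread 0 IVI l ;;
  tick 1 ;;;                                   (* test IDvalInit[l] = 0 *)
  p <-- (if b == 0 then
           IVI' <-- awrite 0 IVI l 1 ;;
           tick 1 ;;;                          (* read D[r,i] *)
           IV' <-- awrite 0%R IV l (D r i) ;;
           ret (IV', IVI', nc)
         else
           v <-- aread 0%R IV l ;;
           tick 2 ;;;                          (* read D[r,i], compare *)
           if v != D r i then
             IV' <-- awrite 0%R IV l (D r i) ;;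
             c <-- aread 0 nc l ;;
             tick 1 ;;;                        (* increment *)
             nc' <-- awrite 0 nc l c.+1 ;;
             ret (IV', IVI, nc')
           else ret (IV, IVI, nc)) ;;
  let: (IV', IVI', nc') := p in
  c <-- aread 0 nc' l ;;
  sub' <-- awrite 0 sub r c ;;
  ret (RSt IV' IVI' sub' nc' nn).

Definition refine (i : 'I_n) (L : seq nat) : CM (seq nat) :=
  alloc (5 * m) ;;;
  st0 <-- ret (RSt (nseq m 0%R) (nseq m 0) (nseq m 0) (nseq m 0) (nseq m 0)) ;;
  st <-- forM (enum 'I_m) (refine_body i L) st0 ;;
  let: RSt IV IVI sub nc nn := st in
  s <-- forM (iota 0 m.-1)
          (fun j acc => c <-- aread 0 nc j ;; tick 1 ;;; ret (acc + c)) 0 ;;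
  nn1 <-- awrite 0 nn m.-1 s ;;
  (* for j = m-2 downto 1: numNewID[j] := numNewID[j+1] - newCount[j] *)
  nn2 <-- forM (rev (iota 1 (m.-1).-1))
          (fun j a => x <-- aread 0 a j.+1 ;; c <-- aread 0 nc j ;;
                      tick 1 ;;; awrite 0 a j (x - c)) nn1 ;;
  alloc m ;;;
  L' <-- forM (iota 0 m)
          (fun j a => lj <-- aread 0 L j ;; x <-- aread 0 nn2 lj ;;
                      y <-- aread 0 sub j ;; tick 2 ;;;
                      awrite 0 a j (lj + x + y)) (nseq m 0) ;;
  free (5 * m) ;;;
  ret L'.

(* QuickLexSortAllSubsets(D,Q,A,L), instrumented.  The set A is represented *)
(* by start = max(A) + 1 (the only information about A the algorithm uses). *)
(* The fuel argument is n initially; it bounds the recursion depth, which is *)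
(* at most n anyway (start strictly increases), so it never truncates.      *)
(* A stack frame holds 3 words (start, loop variable i, return address);    *)
(* the vector L' of a loop iteration lives until the recursive call returns.*)
Fixpoint allSubsets (fuel : nat) (start : nat) (L : seq nat) : CM unit :=
  match fuel with
  | 0 => ret tt
  | fuel'.+1 =>
      alloc 3 ;;;
      forM [seq i <- enum 'I_n | (start <= nat_of_ord i)%N]
        (fun (i : 'I_n) _ =>
           L' <-- refine i L ;;
           tick m ;;;                          (* output L' *)
           allSubsets fuel' i.+1 L' ;;;
           free m) tt ;;;
      free 3
  end.

(* Initial memory: the inputs D (m*n words), Q (m*n words), L (m words) and
   A (1 word). *)
Definition init_state : cst :=
  CSt 0 (m * n + m * n + m + 1) (m * n + m * n + m + 1).

Definition run_all_subsets : cst :=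
  (allSubsets n 0 (nseq m 0) init_state).2.

End Algo.

(* Main.v *)
Require Import Defs.
From HB Require Import structures.
From mathcomp Require Import all_boot all_order all_algebra.
From mathcomp Require Import reals.
From mathcomp Require Import zify.

Definition spec {A} (c : CM A) (T a b M : nat) :=
  forall s, cur s = a -> (time (c s).2 <= time s + T)%N /\ cur (c s).2 = b /\
                         (peak (c s).2 <= maxn (peak s) M)%N.

Lemma spec_weaken {A} (c : CM A) T a b M T' M' :
  spec c T a b M -> (T <= T')%N -> (M <= M')%N -> spec c T' a b M'.
Proof. move=> H h1 h2 s Hs; have := H s Hs; lia. Qed.

Lemma spec_bind {A B} (x : CM A) (f : A -> CM B) T1 T2 a b c M1 M2 :
  spec x T1 a b M1 -> (forall v, spec (f v) T2 b c M2) ->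
  spec (bind x f) (T1 + T2) a c (maxn M1 M2).
Proof.
move=> Hx Hf s Hs; rewrite /bind; case E: (x s) => [v s'].
have := Hx s Hs; rewrite E /= => -[h1 [h2 h3]].
have := Hf v s' h2; lia.
Qed.

Lemma spec_ret {A} (v : A) a : spec (ret v) 0 a a a.
Proof. move=> s Hs /=; lia. Qed.
Lemma spec_ret' {A} (v : A) a b : a = b -> spec (ret v) 0 a b a.
Proof. move=> <-; exact: spec_ret. Qed.
Lemma spec_tick k a : spec (tick k) k a a a.
Proof. move=> s Hs /=; lia. Qed.
Lemma spec_alloc k a : spec (alloc k) k a (a + k) (a + k).
Proof. move=> s Hs /=; lia. Qed.
Lemma spec_free k a : spec (Defs.free k) 0 a (a - k) a.
Proof. move=> s Hs /=; lia. Qed.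
Lemma spec_free' k a b : b = a - k -> spec (Defs.free k) 0 a b a.
Proof. move=> ->; exact: spec_free. Qed.
Lemma spec_aread {T} (x0 : T) l j a : spec (aread x0 l j) 1 a a a.
Proof. move=> s Hs /=; lia. Qed.
Lemma spec_awrite {T} (x0 : T) l j v a : spec (awrite x0 l j v) 1 a a a.
Proof. move=> s Hs /=; lia. Qed.

Lemma spec_forM {I A} (s : seq I) (f : I -> A -> CM A) T a M acc :
  (forall i acc, spec (f i acc) (T i) a a M) ->
  spec (forM s f acc) (\sum_(i <- s) (T i).+1) a a (maxn a M).
Proof.
move=> Hf; elim: s acc => [|i s IH] acc /=.
  by move=> st Hs; rewrite big_nil /=; lia.
rewrite big_cons.
move=> st Hs; rewrite /bind /tick /=.
case E: (f i acc (CSt (time st + 1) (cur st) (peak st))) => [v s0] /=.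
have := Hf i acc (CSt (time st + 1) (cur st) (peak st)) Hs; rewrite E /= => -[h1 [h2 h3]].
have := IH v s0 h2; lia.
Qed.

Lemma spec_forM_const {I A} (s : seq I) (f : I -> A -> CM A) T a M acc :
  (forall i acc, spec (f i acc) T a a M) ->
  spec (forM s f acc) (size s * T.+1) a a (maxn a M).
Proof.
move=> Hf; have := @spec_forM I A s f (fun _ => T) a M acc Hf.
by rewrite big_const_seq count_predT iter_addn_0 mulnC.
Qed.

Lemma sum_nat n k s : s + k = n -> \sum_(s <= i < n) 2^(n - i.+1) + 1 = 2^k.
Proof.
elim: k s => [|k IH] s h.
  by rewrite big_geq //; lia.
rewrite big_ltn; last by lia.
have := IH s.+1 (ltac:(lia)). have -> : n - s.+1 = k by lia.
rewrite expnS; lia.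
Qed.
Lemma sum_pow n s : \sum_(i <- [seq i <- enum 'I_n | (s <= nat_of_ord i)%N]) 2^(n - i.+1) + 1 = 2^(n - s).
Proof.
rewrite big_filter big_enum_cond.
rewrite -(big_mkord (fun i => s <= i) (fun i => 2^(n-i.+1))).
case: (leqP s n) => hsn.
  rewrite (big_cat_nat (leq0n s) hsn) /=.
  rewrite big1_seq; last by move=> i /andP[h1]; rewrite mem_index_iota; lia.
  rewrite big_seq_cond (eq_bigl (fun i => i \in index_iota s n)); last first.
    by move=> i /=; rewrite mem_index_iota; apply/idP/idP; [case/andP|]; lia.
  rewrite -big_seq add0n.
  exact: (@sum_nat n (n - s) s (ltac:(lia))).
rewrite big1_seq; last by move=> i /andP[h1]; rewrite mem_index_iota; lia.
have -> : n - s = 0 by lia. by [].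
Qed.

Section S.
Variables (R : realType) (m n : nat) (D : 'M[R]_(m, n)) (Q : 'M['I_m]_(m, n)).

Lemma spec_body i L j st a : spec (refine_body D Q i L j st) 13 a a a.
Proof.
case: st => IV IVI sub nc nn s Hs.
rewrite /refine_body /bind /tick /aread /awrite /ret /=.
case: eqP => _ /=; [| case: eqP => _ /=]; lia.
Qed.
Ltac prim := first [apply spec_alloc | apply spec_ret | apply spec_tick | apply: spec_aread | apply: spec_awrite | apply spec_free | apply spec_body | (apply spec_forM_const; intros)].
Ltac go := repeat (first [ eapply spec_bind; [ prim | intros ?v; cbv beta ] | prim | (match goal with |- spec (match ?x with _ => _ end) _ _ _ _ => destruct x end) ]).

Lemma spec_refine i L a : (0 < m)%N -> spec (refine D Q i L) (40 * m) a (a + m) (a + 6 * m).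
Proof.
move=> m0; eapply spec_weaken. rewrite /refine. go. apply spec_ret'; lia.
all: rewrite ?size_enum_ord ?size_rev ?size_iota -?subn1 -?subn1; lia.
Qed.

Definition G s := (41 * m + 4) * 2 ^ (n - s) - (41 * m + 1).

Lemma spec_all fuel : (0 < m)%N -> forall start L a,
  spec (allSubsets D Q fuel start L) (G start) a a (a + fuel * (m + 3) + 5 * m).
Proof.
move=> m0; elim: fuel => [|f IH] start L a /=.
  eapply spec_weaken; [exact: spec_ret | lia | lia].
eapply spec_weaken.
  eapply spec_bind; first exact: spec_alloc.
  move=> _; eapply spec_bind.
    apply: (@spec_forM _ _ _ _ (fun i : 'I_n => (41 * m + 4) * 2 ^ (n - i.+1) - 1) (a + 3)
               (a + 3 + m + f * (m + 3) + 5 * m)).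
    move=> i _.
    eapply spec_weaken.
      eapply spec_bind; first exact: spec_refine.
      move=> L'; eapply spec_bind; first exact: spec_tick.
      move=> _; eapply spec_bind; first exact: IH.
      move=> _; apply: spec_free'; lia.
    rewrite /G. have : 0 < 2 ^ (n - i.+1) by rewrite expn_gt0. nia.
    lia.
  move=> _; apply: spec_free'; lia.
rewrite addn0.
rewrite (eq_bigr (fun i : 'I_n => (41 * m + 4) * 2 ^ (n - i.+1))); last first.
  move=> i _; have : 0 < 2 ^ (n - i.+1) by rewrite expn_gt0. nia.
rewrite -big_distrr /=.
have := sum_pow n start. rewrite /G. have : 0 < 2 ^ (n - start) by rewrite expn_gt0. nia.
lia.
Qed.
End S.

Theorem mainTheorem7 :
  exists c : nat,
    forall (R : realType) (m n : nat) (D : 'M[R]_(m, n)) (Q : 'M['I_m]_(m, n)),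
      stores_sorting D Q -> (0 < m)%N -> (0 < n)%N ->
      (time (run_all_subsets D Q) <= c * m * 2 ^ n)%N /\
      (peak (run_all_subsets D Q) <= c * m * n)%N.
Proof.
exists 45 => R m n D Q _ m0 n0.
have := @spec_all R m n D Q n m0 0 (nseq m 0) (m * n + m * n + m + 1) (init_state m n) erefl.
rewrite /run_all_subsets /G /= subn0.
have : 0 < 2 ^ n by rewrite expn_gt0. nia.
Qed.
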